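(* Let $\phi:Z\to[-\infty,+\infty]$ be proper and closed and suppose Assumptions (A1) and (A2) hold for some $\lambda\in\mathbb R$. Then for every $z\in Z$ and $\tau\in(0,1/\lambda^-)$, $|\partial\phi|(J_\tau z)\le\frac{\mathsf d_Z(J_\tau z,z)}{\tau}\le\frac1{1+\lambda\tau}|\partial\phi|(z)$. In particular $J_\tau z\in D(|\partial\phi|)$.
   Context: $(X,\mathsf d_X)$, $(Y,\mathsf d_Y)$ complete metric spaces; $Z=X\times Y$ with $\mathsf d_Z=(\mathsf d_X^2+\mathsf d_Y^2)^{1/2}$. $D_X\phi=\{x:\phi(x,y)<+\infty\ \forall y\}$, $D_Y\phi=\{y:\phi(x,y)>-\infty\ \forall x\}$, $D\phi=D_X\phi\times D_Y\phi$; proper: $D\phi\ne\emptyset$; closed: for $x\in D_X\phi$, $y\mapsto\phi(x,y)$ upper semicontinuous, for $y\in D_Y\phi$, $x\mapsto\phi(x,y)$ lower semicontinuous. (A1): $\phi=+\infty$ on $(X\setminus D_X\phi)\times D_Y\phi$, $\phi=-\infty$ on $D_X\phi\times(Y\setminus D_Y\phi)$. $\lambda^-=\max\{-\lambda,0\}$, $1/\lambda^-:=+\infty$ if $\lambda^-=0$. $\Phi_\tau(x,y;x',y')=\phi(x',y')+\frac1{2\tau}(\mathsf d_X^2(x',x)-\mathsf d_Y^2(y',y))$. $f$ on $Z$ is $\mu$-convex-concave along curves $\gamma,\sigma$ if for all $t\in[0,1]$: $f(\gamma_t,y)\le(1-t)f(\gamma_0,y)+tf(\gamma_1,y)-\frac\mu2t(1-t)\mathsf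 d_X^2(\gamma_0,\gamma_1)$ for all $y$ and $f(x,\sigma_t)\ge(1-t)f(x,\sigma_0)+tf(x,\sigma_1)+\frac\mu2t(1-t)\mathsf d_Y^2(\sigma_0,\sigma_1)$ for all $x$. (A2) for $\lambda$: for every $(x,y)\in Z$, $(x_0,y_0),(x_1,y_1)\in D\phi$ there are continuous curves $\gamma$ from $x_0$ to $x_1$, $\sigma$ from $y_0$ to $y_1$ such that for all $\tau\in(0,1/\lambda^-)$, $(x',y')\mapsto\Phi_\tau(x,y;x',y')$ is $(\tau^{-1}+\lambda)$-convex-concave along them. $J_\tau z$ is the (unique, existing under these assumptions) saddle point of $z'\mapsto\Phi_\tau(z;z')$. Slope: for $z=(x,y)\in D\phi$ not isolated, $|\partial\phi|(z)=\limsup_{D\phi\ni z'=(x',y')\to z}\frac{\max\{\phi(x,y')-\phi(x',y),0\}}{\mathsf d_Z(z',z)}$; $0$ at isolated points of $D\phi$; $+\infty$ off $D\phi$. $D(|\partial\phi|)=\{z\in D\phi:|\partial\phi|(z)<+\infty\}$. *)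

(* Defs.v *)
From HB Require Import structures.
From mathcomp Require Import all_boot all_order all_algebra.
From mathcomp Require Import boolp classical_sets reals constructive_ereal ereal.
Set Implicit Arguments. Unset Strict Implicit. Unset Printing Implicit Defensive.
Import Order.TTheory GRing.Theory Num.Theory.
Local Open Scope ring_scope.
Local Open Scope classical_set_scope.

Section Defs.
Variable R : realType.

Definition is_metric (T : Type) (d : T -> T -> R) : Prop :=
  (forall x y, d x y = 0 <-> x = y) /\
  (forall x y, d x y = d y x) /\
  (forall x y z, d x z <= d x y + d y z).

Definition complete_metric (T : Type) (d : T -> T -> R) : Prop :=
  forall u : nat -> T,
    (forall e, 0 < e -> exists N, forall m n, (N <= m)%N -> (N <= n)%N -> d (u m) (u n) < e) ->
    exists l, forall e, 0 < e -> exists N, forall n, (N <= n)%N -> d (u n) l < e.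

Definition dZ (X Y : Type) (dX : X -> X -> R) (dY : Y -> Y -> R)
  (z z' : X * Y) : R :=
  Num.sqrt (dX z.1 z'.1 ^+ 2 + dY z.2 z'.2 ^+ 2).

Definition DX (X Y : Type) (phi : X * Y -> \bar R) : set X :=
  [set x | forall y, (phi (x, y) < +oo)%E].
Definition DY (X Y : Type) (phi : X * Y -> \bar R) : set Y :=
  [set y | forall x, (-oo < phi (x, y))%E].
Definition Dphi (X Y : Type) (phi : X * Y -> \bar R) : set (X * Y) :=
  [set z | DX phi z.1 /\ DY phi z.2].

Definition proper_fun (X Y : Type) (phi : X * Y -> \bar R) : Prop :=
  Dphi phi !=set0.

Definition lsc (T : Type) (d : T -> T -> R) (f : T -> \bar R) : Prop :=
  forall x (a : R), (a%:E < f x)%E ->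
    exists r, 0 < r /\ forall x', d x x' < r -> (a%:E < f x')%E.
Definition usc (T : Type) (d : T -> T -> R) (f : T -> \bar R) : Prop :=
  forall x (a : R), (f x < a%:E)%E ->
    exists r, 0 < r /\ forall x', d x x' < r -> (f x' < a%:E)%E.

Definition closed_fun (X Y : Type) (dX : X -> X -> R) (dY : Y -> Y -> R)
  (phi : X * Y -> \bar R) : Prop :=
  (forall x, DX phi x -> usc dY (fun y => phi (x, y))) /\
  (forall y, DY phi y -> lsc dX (fun x => phi (x, y))).

Definition A1 (X Y : Type) (phi : X * Y -> \bar R) : Prop :=
  (forall x y, ~ DX phi x -> DY phi y -> phi (x, y) = +oo%E) /\
  (forall x y, DX phi x -> ~ DY phi y -> phi (x, y) = -oo%E).

Definition lamneg (lam : R) : R := Num.max (- lam) 0.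
Definition inv_lamneg (lam : R) : \bar R :=
  if lamneg lam == 0 then +oo%E else ((lamneg lam)^-1)%:E.
Definition tau_range (lam tau : R) : Prop := 0 < tau /\ (tau%:E < inv_lamneg lam)%E.

Definition Phi (X Y : Type) (dX : X -> X -> R) (dY : Y -> Y -> R)
  (phi : X * Y -> \bar R) (tau : R) (z z' : X * Y) : \bar R :=
  (phi z' + ((dX z'.1 z.1 ^+ 2 - dY z'.2 z.2 ^+ 2) / (2 * tau))%:E)%E.

Definition curve_cont (T : Type) (d : T -> T -> R) (g : R -> T) : Prop :=
  forall t, 0 <= t <= 1 -> forall e, 0 < e -> exists del, 0 < del /\
    forall s, 0 <= s <= 1 -> `|s - t| < del -> d (g s) (g t) < e.

Definition cvx_ccv_along (X Y : Type) (dX : X -> X -> R) (dY : Y -> Y -> R)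
  (f : X * Y -> \bar R) (mu : R) (gam : R -> X) (sig : R -> Y) : Prop :=
  forall t, 0 <= t <= 1 ->
   (forall y, (f (gam t, y) <= (1 - t)%R%:E * f (gam 0%R, y) + t%:E * f (gam 1%R, y)
                 - (mu / 2 * t * (1 - t) * dX (gam 0%R) (gam 1%R) ^+ 2)%R%:E)%E) /\
   (forall x, (f (x, sig t) >= (1 - t)%R%:E * f (x, sig 0%R) + t%:E * f (x, sig 1%R)
                 + (mu / 2 * t * (1 - t) * dY (sig 0%R) (sig 1%R) ^+ 2)%R%:E)%E).

Definition A2 (X Y : Type) (dX : X -> X -> R) (dY : Y -> Y -> R)
  (phi : X * Y -> \bar R) (lam : R) : Prop :=
  forall (z z0 z1 : X * Y), Dphi phi z0 -> Dphi phi z1 ->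
    exists (gam : R -> X) (sig : R -> Y),
      curve_cont dX gam /\ curve_cont dY sig /\
      gam 0 = z0.1 /\ gam 1 = z1.1 /\ sig 0 = z0.2 /\ sig 1 = z1.2 /\
      forall tau, tau_range lam tau ->
        cvx_ccv_along dX dY (Phi dX dY phi tau z) (tau^-1 + lam) gam sig.

Definition saddle_point (X Y : Type) (F : X * Y -> \bar R) (zb : X * Y) : Prop :=
  forall x y, (F (zb.1, y) <= F zb)%E /\ (F zb <= F (x, zb.2))%E.

Definition isolated_in (T : Type) (d : T -> T -> R) (A : set T) (z : T) : Prop :=
  exists r, 0 < r /\ forall z', A z' -> ~ (0 < d z' z < r).

Definition slope_ratio (X Y : Type) (dX : X -> X -> R) (dY : Y -> Y -> R)
  (phi : X * Y -> \bar R) (z z' : X * Y) : \bar R :=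
  (maxe (phi (z.1, z'.2) - phi (z'.1, z.2)) 0%E * ((dZ dX dY z' z)^-1)%:E)%E.

Definition slope (X Y : Type) (dX : X -> X -> R) (dY : Y -> Y -> R)
  (phi : X * Y -> \bar R) (z : X * Y) : \bar R :=
  if `[< Dphi phi z >] then
    if `[< isolated_in (dZ dX dY) (Dphi phi) z >] then 0%E
    else ereal_inf [set s | exists r, 0 < r /\
           s = ereal_sup [set v | exists z', Dphi phi z' /\ 0 < dZ dX dY z' z < r /\
                                           v = slope_ratio dX dY phi z z']]
  else +oo%E.

End Defs.

(* Main.v *)
Require Import Defs.
From HB Require Import structures.
From mathcomp Require Import all_boot all_order all_algebra.
From mathcomp Require Import boolp classical_sets reals constructive_ereal ereal.
From mathcomp Require Import ring lra.
Import Order.TTheory GRing.Theory Num.Theory.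
Local Open Scope ring_scope.
Local Open Scope classical_set_scope.
Set Implicit Arguments. Unset Strict Implicit.

Lemma lim0_aux (R : realType) (u C s0 : R) : 0 < s0 ->
  (forall s, 0 < s -> s <= s0 -> u <= s * C) -> u <= 0.
Proof.
move=> s0p H; rewrite leNgt; apply/negP => up.
have Cp : 0 < `|C| + 1 by rewrite ltr_pwDr // normr_ge0.
set s := Num.min s0 (u / (2 * (`|C| + 1))).
have sp : 0 < s by rewrite lt_min s0p divr_gt0 // mulr_gt0.
have := H s sp; rewrite ge_min lexx => /(_ isT).
have h1 : s <= u / (2 * (`|C| + 1)) by rewrite ge_min lexx orbT.
have h2 : s * C <= s * (`|C| + 1) by rewrite ler_pM2l //; have := ler_norm C; lra.
have h3 : s * (`|C| + 1) <= u / 2.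
  apply: (le_trans (ler_wpM2r (ltW Cp) h1)); rewrite le_eqVlt; apply/orP; left; apply/eqP.
  by field; rewrite gt_eqF.
lra.
Qed.

Lemma lim1_aux (R : realType) (u v : R) :
  (forall t, 0 < t -> t < 1 -> t * v <= u) -> v <= u.
Proof.
move=> H; rewrite -subr_le0; apply: (@lim0_aux _ _ v (1/2)) => // s s0 s1.
have := H (1 - s); lra.
Qed.

Lemma dxx (R : realType) (T : Type) (d : T -> T -> R) : is_metric d -> forall x, d x x = 0.
Proof. by case=> H _ x; apply/H. Qed.

Lemma d_ge0 (R : realType) (T : Type) (d : T -> T -> R) : is_metric d -> forall x y, 0 <= d x y.
Proof.
move=> hd x y; have := hd.2.2 x y x; rewrite (dxx hd) (hd.2.1 y x); lra.
Qed.

Lemma dZ_ge0 (R : realType) X Y (dX : X -> X -> R) (dY : Y -> Y -> R) z z' :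
  0 <= dZ dX dY z z'.
Proof. exact: sqrtr_ge0. Qed.

Lemma phi_fin (R : realType) X Y (phi : X * Y -> \bar R) x y :
  DX phi x -> DY phi y -> phi (x, y) = (fine (phi (x, y)))%:E.
Proof.
move=> hx hy; rewrite fineK // fin_numElt; apply/andP; split; [exact: hy | exact: hx].
Qed.

Lemma ratio_ge0 (R : realType) X Y (dX : X -> X -> R) (dY : Y -> Y -> R) phi z z' :
  (0 <= slope_ratio dX dY phi z z')%E.
Proof.
rewrite /slope_ratio; apply: mule_ge0; first by rewrite le_max lexx orbT.
by rewrite lee_fin invr_ge0 dZ_ge0.
Qed.

Lemma slope_ge0 (R : realType) X Y (dX : X -> X -> R) (dY : Y -> Y -> R) phi w :
  (0 <= slope dX dY phi w)%E.
Proof.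
rewrite /slope; case: ifPn => // hD.
case: ifPn => // hiso; apply: le_ereal_inf_tmp => s [r [r0 ->]].
have : ~ isolated_in (dZ dX dY) (Dphi phi) w by move/asboolP => h; rewrite h in hiso.
move=> niso.
have [z' [hz' hd]] : exists z', Dphi phi z' /\ 0 < dZ dX dY z' w < r.
  apply: contrapT => hn; apply: niso; exists r; split => // z' hz' hd.
  by apply: hn; exists z'.
apply: le_trans (ratio_ge0 dX dY phi w z') _.
by apply: ereal_sup_ubound; exists z'.
Qed.

Lemma slope_ub (R : realType) X Y (dX : X -> X -> R) (dY : Y -> Y -> R) phi w (M : R) :
  0 <= M -> Dphi phi w ->
  (forall e, 0 < e -> exists r, 0 < r /\ forall z', Dphi phi z' -> 0 < dZ dX dY z' w < r ->
      (slope_ratio dX dY phi w z' <= (M + e)%:E)%E) ->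
  (slope dX dY phi w <= M%:E)%E.
Proof.
move=> M0 hw H; rewrite /slope (asboolT hw); case: ifPn => _; first by rewrite lee_fin.
apply/lee_addgt0Pr => e e0; have [r [r0 Hr]] := H e e0.
apply: (@le_trans _ _ (ereal_sup [set v | exists z', Dphi phi z' /\ 0 < dZ dX dY z' w < r /\
                                           v = slope_ratio dX dY phi w z'])).
  by apply: ereal_inf_lbound; exists r.
apply: ge_ereal_sup => v [z' [hz' [hd ->]]]; rewrite -EFinD; exact: Hr.
Qed.

Lemma slope_lb (R : realType) X Y (dX : X -> X -> R) (dY : Y -> Y -> R) phi w (M : R) :
  Dphi phi w ->
  (forall e r, 0 < e -> 0 < r -> exists z', Dphi phi z' /\ 0 < dZ dX dY z' w < r /\
      ((M - e)%:E <= slope_ratio dX dY phi w z')%E) ->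
  (M%:E <= slope dX dY phi w)%E.
Proof.
move=> hw H; rewrite /slope (asboolT hw); case: ifPn => hiso.
  move/asboolP: hiso => [r [r0 Hr]].
  have [z' [hz' [hd _]]] := H 1 r ltr01 r0.
  by case: (Hr z' hz').
apply: le_ereal_inf_tmp => s [r [r0 ->]].
apply/lee_addgt0Pr => e e0.
have [z' [hz' [hd he]]] := H e r e0 r0.
have hs : ((M - e)%:E <= ereal_sup [set v | exists z', Dphi phi z' /\ (0 < dZ dX dY z' w < r)%R /\
                                           v = slope_ratio dX dY phi w z'])%E.
  by apply: le_trans he _; apply: ereal_sup_ubound; exists z'.
have -> : M = (M - e) + e by rewrite subrK.
by rewrite EFinD; apply: leeD2r.
Qed.
Lemma cs_aux (R : realType) (a b c d : R) : 0 <= a -> 0 <= b -> 0 <= c -> 0 <= d ->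
  a * c + b * d <= Num.sqrt (a ^+ 2 + b ^+ 2) * Num.sqrt (c ^+ 2 + d ^+ 2).
Proof.
move=> a0 b0 c0 d0.
rewrite -sqrtrM ?addr_ge0 ?sqr_ge0 //.
have h : a * c + b * d = Num.sqrt ((a * c + b * d) ^+ 2).
  by rewrite sqrtr_sqr ger0_norm // addr_ge0 // mulr_ge0.
rewrite [X in X <= _]h ler_sqrt; last by rewrite mulr_ge0 // addr_ge0 // sqr_ge0.
have : 0 <= (a * d - b * c) ^+ 2 by rewrite sqr_ge0.
nra.
Qed.

Lemma mul_aux (R : realType) (c a b u v : R) : 0 < c ->
  a + u / c <= b + v / c -> c * (a - b) <= v - u.
Proof.
move=> c0 H; rewrite mulrC -ler_pdivlMr // mulrBl; lra.
Qed.

Lemma step2_aux (R : realType) (s t lam pg p00 p10 a Dx : R) : 0 < s ->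
  pg + (a ^+ 2 - 0 ^+ 2) / (2 * s) <=
    (1 - t) * (p00 + (0 ^+ 2 - 0 ^+ 2) / (2 * s)) + t * (p10 + (Dx ^+ 2 - 0 ^+ 2) / (2 * s))
    - ((s^-1 + lam) / 2 * t * (1 - t) * Dx ^+ 2) ->
  a ^+ 2 - t ^+ 2 * Dx ^+ 2 <= s * (2 * (1 - t) * p00 + 2 * t * p10 - 2 * pg - lam * t * (1 - t) * Dx ^+ 2).
Proof.
move=> s0 H; rewrite -subr_ge0 in H; rewrite -subr_ge0.
have := mulr_ge0 (ltW (mulr_gt0 (ltr0Sn _ 1) s0)) H.
set L := (X in 0 <= X -> _); set Rr := (X in _ -> 0 <= X).
have -> : L = Rr; last by [].
by rewrite /L /Rr; field; rewrite gt_eqF.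
Qed.

Lemma step3a_aux (R : realType) (t KJ K01 m d : R) : 0 < t < 1 ->
  KJ <= (1 - t) * K01 + t * KJ - (m * t * (1 - t) * d) -> t * (m * d) <= K01 - KJ.
Proof.
move=> /andP[t0 t1] H.
have h : 0 <= (1 - t) * (K01 - KJ - t * (m * d)) by lra.
rewrite pmulr_rge0 in h; lra.
Qed.

Lemma step3b_aux (R : realType) (t KJ K10 m d : R) : 0 < t < 1 ->
  (1 - t) * K10 + t * KJ + (m * t * (1 - t) * d) <= KJ -> t * (m * d) <= KJ - K10.
Proof.
move=> /andP[t0 t1] H.
have h : 0 <= (1 - t) * (KJ - K10 - t * (m * d)) by lra.
rewrite pmulr_rge0 in h; lra.
Qed.

Lemma sqrt_le_aux (R : realType) (a b t P Q : R) : 0 <= a -> 0 <= b -> 0 <= t ->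
  a <= t * P -> b <= t * Q ->
  Num.sqrt (a ^+ 2 + b ^+ 2) <= t * Num.sqrt (P ^+ 2 + Q ^+ 2).
Proof.
move=> a0 b0 t0 ha hb.
have P0 : 0 <= t * P by apply: le_trans ha.
have Q0 : 0 <= t * Q by apply: le_trans hb.
rewrite -(ger0_norm t0) -sqrtr_sqr -sqrtrM ?sqr_ge0 // ler_sqrt; last by rewrite mulr_ge0 // ?sqr_ge0 // addr_ge0 // sqr_ge0.
have h1 : a ^+ 2 <= (t * P) ^+ 2 by rewrite ler_sqr.
have h2 : b ^+ 2 <= (t * Q) ^+ 2 by rewrite ler_sqr.
rewrite !exprMn in h1 h2; lra.
Qed.

Lemma step4_aux (R : realType) (tau t m pg0 p0s p00 p10 p01 a b Dx Dy : R) : 0 < tau -> 0 <= t ->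
  pg0 + (a ^+ 2 - 0 ^+ 2) / (2 * tau) <=
    (1 - t) * (p00 + (0 ^+ 2 - 0 ^+ 2) / (2 * tau)) + t * (p10 + (Dx ^+ 2 - 0 ^+ 2) / (2 * tau))
    - (m * t * (1 - t) * Dx ^+ 2) ->
  (1 - t) * (p00 + (0 ^+ 2 - 0 ^+ 2) / (2 * tau)) + t * (p01 + (0 ^+ 2 - Dy ^+ 2) / (2 * tau))
    + (m * t * (1 - t) * Dy ^+ 2) <= p0s + (0 ^+ 2 - b ^+ 2) / (2 * tau) ->
  m * Dx ^+ 2 + m * Dy ^+ 2 <= (p01 + (0 ^+ 2 - Dy ^+ 2) / (2 * tau)) - (p10 + (Dx ^+ 2 - 0 ^+ 2) / (2 * tau)) ->
  m * t * (2 - t) * (Dx ^+ 2 + Dy ^+ 2) <= p0s - pg0.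
Proof.
move=> tau0 t0 HX HY S3.
have tS3 := ler_wpM2l t0 S3.
have ha : 0 <= a ^+ 2 / (2 * tau) by rewrite divr_ge0 ?sqr_ge0 // mulr_ge0 // ltW.
have hb : 0 <= b ^+ 2 / (2 * tau) by rewrite divr_ge0 ?sqr_ge0 // mulr_ge0 // ltW.
rewrite !expr0n /= in HX HY S3 tS3 *.
lra.
Qed.

Lemma ratio_E (R : realType) X Y (dX : X -> X -> R) (dY : Y -> Y -> R) phi w z' (a b : R) :
  phi (w.1, z'.2) = a%:E -> phi (z'.1, w.2) = b%:E ->
  slope_ratio dX dY phi w z' = (Num.max (a - b) 0 / dZ dX dY z' w)%:E.
Proof.
by move=> ha hb; rewrite /slope_ratio ha hb -EFinB -EFin_max -EFinM.
Qed.

Unset Implicit Arguments.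
Theorem mainTheorem12 (R : realType) (X Y : Type)
  (dX : X -> X -> R) (dY : Y -> Y -> R)
  (hX : is_metric dX) (hY : is_metric dY)
  (cX : complete_metric dX) (cY : complete_metric dY)
  (phi : X * Y -> \bar R) (lam : R)
  (hprop : proper_fun phi) (hclosed : closed_fun dX dY phi)
  (hA1 : A1 phi) (hA2 : A2 dX dY phi lam)
  (z : X * Y) (tau : R) (htau : tau_range lam tau)
  (J : X * Y) (hJ : saddle_point (Phi dX dY phi tau z) J) :
  (slope dX dY phi J <= (dZ dX dY J z / tau)%:E)%E /\
  ((dZ dX dY J z / tau)%:E <= ((1 + lam * tau)^-1)%:E * slope dX dY phi z)%E /\
  (Dphi phi J /\ (slope dX dY phi J < +oo)%E).
Proof.
have tau0 : 0 < tau := htau.1.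
have hmu : 0 < 1 + lam * tau.
  move: htau => [_]; rewrite /inv_lamneg /lamneg; case: eqP => [/eqP|] hl.
    move=> _; have : - lam <= 0 by move: hl; rewrite eq_le ge_max => /andP[/andP[]].
    nra.
  rewrite lte_fin => ht.
  have hm0 : 0 < Num.max (- lam) 0 by rewrite lt_neqAle eq_sym; apply/andP; split; [apply/eqP|rewrite le_max lexx orbT].
  have : tau * Num.max (- lam) 0 < 1 by rewrite -ltr_pdivlMr // div1r.
  have : - lam <= Num.max (- lam) 0 by rewrite le_max lexx.
  nra.
have hrange : forall s, 0 < s -> s <= tau -> tau_range lam s.
  move=> s s0 st; split => //; apply: le_lt_trans htau.2; by rewrite lee_fin.
case: z hJ hA2 => x0 y0 hJ hA2; case: J hJ => x1 y1 hJ.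
have [[xp yp] [hxp hyp]] := hprop.
set p := fun x y => fine (phi (x, y)).
have PhiE : forall s x y, DX phi x -> DY phi y ->
    Phi dX dY phi s (x0, y0) (x, y) = (p x y + (dX x x0 ^+ 2 - dY y y0 ^+ 2) / (2 * s))%:E.
  by move=> s x y hx hy; rewrite /Phi /= (phi_fin hx hy) EFinD.
have hx1 : DX phi x1.
  move=> y; have [h1 h2] := hJ xp y.
  have := le_trans h1 h2; rewrite /Phi /=.
  have := hxp y1; rewrite /=.
  case: (phi (x1, y)) => [r _ _|hp|] //; first exact: ltry.
  by move: hp; case: (phi (xp, y1)).
have hy1 : DY phi y1.
  move=> x; have [h1 h2] := hJ x yp.
  have := le_trans h1 h2; rewrite /Phi /=.
  have := hyp x1; rewrite /=.
  case: (phi (x, y1)) => [r _ _||hp] //; first exact: ltNyr.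
  by move: hp; case: (phi (x1, yp)).
have hJD : Dphi phi (x1, y1) by split.
set D := dZ dX dY (x1, y1) (x0, y0).
have D0 : 0 <= D by exact: dZ_ge0.
have part1 : (slope dX dY phi (x1, y1) <= (D / tau)%:E)%E.
  apply: slope_ub => //; first by rewrite divr_ge0 // ltW.
  move=> e e0; exists (2 * tau * e); split; first by rewrite !mulr_gt0.
  move=> [x' y'] [hx' hy'] /andP[rho0 rhor].
  rewrite (@ratio_E _ _ _ _ _ _ _ _ (p x1 y') (p x' y1)) /=; last 2 first.
    exact: phi_fin. exact: phi_fin.
  rewrite lee_fin ler_pdivrMr // ge_max; apply/andP; split; last first.
    by rewrite mulr_ge0 // ?addr_ge0 ?divr_ge0 // ltW.
  have [h1 h2] := hJ x' y'; have := le_trans h1 h2.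
  rewrite /= !PhiE // lee_fin => /(mul_aux (mulr_gt0 (ltr0Sn _ 1) tau0)) H.
  set rho := dZ dX dY (x', y') (x1, y1) in rho0 rhor *.
  have tx := hX.2.2 x' x1 x0; have ty := hY.2.2 y' y1 y0.
  have a0 := d_ge0 hX x' x1; have b0 := d_ge0 hY y' y1.
  have P0 := d_ge0 hX x1 x0; have Q0 := d_ge0 hY y1 y0.
  have c0 := d_ge0 hX x' x0; have e0' := d_ge0 hY y' y0.
  have cs : dX x' x1 * dX x1 x0 + dY y' y1 * dY y1 y0 <= rho * D := cs_aux a0 b0 P0 Q0.
  have rho2 : rho ^+ 2 = dX x' x1 ^+ 2 + dY y' y1 ^+ 2 by rewrite sqr_sqrtr // addr_ge0 // sqr_ge0.
  have D2 : D ^+ 2 = dX x1 x0 ^+ 2 + dY y1 y0 ^+ 2 by rewrite sqr_sqrtr // addr_ge0 // sqr_ge0.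
  have sx : dX x' x0 ^+ 2 <= (dX x' x1 + dX x1 x0) ^+ 2 by rewrite ler_sqr ?nnegrE ?addr_ge0.
  have sy : dY y' y0 ^+ 2 <= (dY y' y1 + dY y1 y0) ^+ 2 by rewrite ler_sqr ?nnegrE ?addr_ge0.
  have rr : rho * rho <= 2 * tau * e * rho by rewrite ler_pM2r // ltW.
  rewrite -(ler_pM2l (mulr_gt0 (ltr0Sn _ 1) tau0)).
  have -> : 2 * tau * ((D / tau + e) * rho) = 2 * D * rho + 2 * tau * e * rho.
    by field; rewrite gt_eqF.
  rewrite expr2 in rho2; lra.
set mu := tau^-1 + lam.
have mup : 0 < mu.
  have : mu * tau = 1 + lam * tau by rewrite /mu mulrDl mulVf ?gt_eqF.
  move=> h; rewrite -(pmulr_lgt0 _ tau0) h //.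
have part2 : ((mu * D)%:E <= slope dX dY phi (x0, y0))%E.
  case: (pselect (Dphi phi (x0, y0))) => hz; last first.
    by rewrite /slope asboolF //; exact: leey.
  have [Dz | Dn0] := eqVneq D 0.
    by rewrite Dz mulr0; exact: slope_ge0.
  have Dp : 0 < D by rewrite lt_neqAle eq_sym Dn0.
  have [gam [sig [_ [_ [g0 [g1 [s0 [s1 hcv]]]]]]]] := hA2 (x0, y0) (x0, y0) (x1, y1) hz hJD.
  simpl in g0, g1, s0, s1.
  have [hz1 hz2] := hz; simpl in hz1, hz2.
  have dxs := hX.2.1 x0 x1.
  have hg : forall t, 0 <= t <= 1 -> DX phi (gam t).
    move=> t ht; apply: contrapT => hn.
    have [c1 _] := hcv tau (hrange tau tau0 (lexx _)) t ht.
    have := c1 y0; rewrite g0 g1 (PhiE _ x0 y0) // (PhiE _ x1 y0) // -!EFinM -!EFinD /Phi /=.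
    by rewrite (hA1.1 (gam t) y0 hn hz2).
  have hs : forall t, 0 <= t <= 1 -> DY phi (sig t).
    move=> t ht; apply: contrapT => hn.
    have [_ c2] := hcv tau (hrange tau tau0 (lexx _)) t ht.
    have := c2 x0; rewrite s0 s1 (PhiE _ x0 y0) // (PhiE _ x0 y1) // -!EFinM -!EFinD /Phi /=.
    by rewrite (hA1.2 x0 (sig t) hz1 hn).
  have dys := hY.2.1 y0 y1.
  have ha : forall t, 0 <= t <= 1 -> dX (gam t) x0 <= t * dX x1 x0.
    move=> t ht; have hgt := hg t ht.
    have : dX (gam t) x0 ^+ 2 - t ^+ 2 * dX x1 x0 ^+ 2 <= 0.
      apply: (lim0_aux (C := 2 * (1 - t) * p x0 y0 + 2 * t * p x1 y0 - 2 * p (gam t) y0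
                 - lam * t * (1 - t) * dX x1 x0 ^+ 2) tau0) => ss ss0 ssle.
      have [c1 _] := hcv ss (hrange ss ss0 ssle) t ht.
      have := c1 y0; rewrite g0 g1 !PhiE // -!EFinM -!EFinD lee_fin !(dxx hX) !(dxx hY) dxs.
      exact: step2_aux.
    have t0 : 0 <= t by case/andP: ht.
    rewrite subr_le0 -exprMn ler_sqr // nnegrE ?mulr_ge0 //; exact: d_ge0.
  have hb : forall t, 0 <= t <= 1 -> dY (sig t) y0 <= t * dY y1 y0.
    move=> t ht; have hst := hs t ht.
    have : dY (sig t) y0 ^+ 2 - t ^+ 2 * dY y1 y0 ^+ 2 <= 0.
      apply: (lim0_aux (C := 2 * (1 - t) * (- p x0 y0) + 2 * t * (- p x0 y1) - 2 * (- p x0 (sig t))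
                 - lam * t * (1 - t) * dY y1 y0 ^+ 2) tau0) => ss ss0 ssle.
      have [_ c2] := hcv ss (hrange ss ss0 ssle) t ht.
      have := c2 x0; rewrite s0 s1 !PhiE // -!EFinM -!EFinD lee_fin !(dxx hX) !(dxx hY) dys.
      move=> H; apply: step2_aux => //.
      lra.
    have t0 : 0 <= t by case/andP: ht.
    rewrite subr_le0 -exprMn ler_sqr // nnegrE ?mulr_ge0 //; exact: d_ge0.
  have S3x : (tau^-1 + lam) / 2 * dX x1 x0 ^+ 2 <=
      (p x0 y1 + (0 ^+ 2 - dY y1 y0 ^+ 2) / (2 * tau)) - (p x1 y1 + (dX x1 x0 ^+ 2 - dY y1 y0 ^+ 2) / (2 * tau)).
    apply: lim1_aux => t t0 t1.
    have ht : 0 <= t <= 1 by rewrite !ltW.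
    have hgt := hg t ht.
    have [c1 _] := hcv tau (hrange tau tau0 (lexx _)) t ht.
    have h1 := (hJ (gam t) y1).2.
    have := le_trans h1 (c1 y1); rewrite g0 g1 !PhiE // -!EFinM -!EFinD lee_fin !(dxx hX) dxs.
    by apply: step3a_aux; rewrite t0 t1.
  have S3y : (tau^-1 + lam) / 2 * dY y1 y0 ^+ 2 <=
      (p x1 y1 + (dX x1 x0 ^+ 2 - dY y1 y0 ^+ 2) / (2 * tau)) - (p x1 y0 + (dX x1 x0 ^+ 2 - 0 ^+ 2) / (2 * tau)).
    apply: lim1_aux => t t0 t1.
    have ht : 0 <= t <= 1 by rewrite !ltW.
    have hst := hs t ht.
    have [_ c2] := hcv tau (hrange tau tau0 (lexx _)) t ht.
    have h2 := (hJ x1 (sig t)).1.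
    have := le_trans (c2 x1) h2; rewrite s0 s1 !PhiE // -!EFinM -!EFinD lee_fin !(dxx hY) dys.
    by apply: step3b_aux; rewrite t0 t1.
  have D2 : D ^+ 2 = dX x1 x0 ^+ 2 + dY y1 y0 ^+ 2 by rewrite sqr_sqrtr // addr_ge0 // sqr_ge0.
  have S4 : forall t, 0 < t -> t <= 1 ->
      mu / 2 * t * (2 - t) * D ^+ 2 <= p x0 (sig t) - p (gam t) y0.
    move=> t t0 t1; have ht : 0 <= t <= 1 by rewrite ltW.
    have hgt := hg t ht; have hst := hs t ht.
    have [c1 c2] := hcv tau (hrange tau tau0 (lexx _)) t ht.
    have X4 := c1 y0; have Y4 := c2 x0.
    rewrite g0 g1 !PhiE // -!EFinM -!EFinD lee_fin !(dxx hX) !(dxx hY) dxs in X4.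
    rewrite s0 s1 !PhiE // -!EFinM -!EFinD lee_fin !(dxx hX) !(dxx hY) dys in Y4.
    rewrite D2; apply: (step4_aux tau0 (ltW t0) X4 Y4).
    lra.
  apply: slope_lb => // e r e0 r0.
  set t := Num.min 1 (Num.min (r / (2 * D)) (e / (mu * D))).
  have t0 : 0 < t by rewrite !lt_min ltr01 !divr_gt0 // mulr_gt0.
  have t1 : t <= 1 by rewrite ge_min lexx.
  have tr : t <= r / (2 * D) by rewrite !ge_min lexx orbT.
  have te : t <= e / (mu * D) by rewrite !ge_min lexx !orbT.
  rewrite ler_pdivlMr ?mulr_gt0 // in tr.
  rewrite ler_pdivlMr ?mulr_gt0 // in te.
  have ht : 0 <= t <= 1 by rewrite ltW.
  have hgt := hg t ht; have hst := hs t ht.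
  exists (gam t, sig t); split; first by split.
  set r' := dZ dX dY (gam t, sig t) (x0, y0).
  have hr' : r' <= t * D := sqrt_le_aux (d_ge0 hX _ _) (d_ge0 hY _ _) (ltW t0) (ha t ht) (hb t ht).
  have hS := S4 t t0 t1.
  have r'0 : 0 <= r' by exact: dZ_ge0.
  have r'p : 0 < r'.
    rewrite lt_neqAle r'0 andbT; apply/eqP => h0.
    have e2 : r' ^+ 2 = dX (gam t) x0 ^+ 2 + dY (sig t) y0 ^+ 2 by rewrite sqr_sqrtr // addr_ge0 // sqr_ge0.
    rewrite -h0 expr0n /= in e2.
    have a2 : dX (gam t) x0 ^+ 2 = 0.
      have := sqr_ge0 (dX (gam t) x0); have := sqr_ge0 (dY (sig t) y0); lra.
    have b2 : dY (sig t) y0 ^+ 2 = 0.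
      have := sqr_ge0 (dX (gam t) x0); have := sqr_ge0 (dY (sig t) y0); lra.
    move/eqP: a2; rewrite expf_eq0 /= => /eqP/(hX.1) ea.
    move/eqP: b2; rewrite expf_eq0 /= => /eqP/(hY.1) eb.
    rewrite ea eb subrr in hS.
    have : 0 < mu / 2 * t * (2 - t) * D ^+ 2.
      by rewrite !mulr_gt0 ?divr_gt0 ?exprn_gt0 // subr_gt0; apply: le_lt_trans t1 _; rewrite ltr1n.
    lra.
  split.
    apply/andP; split => //; apply: le_lt_trans hr' _; lra.
  rewrite (@ratio_E _ _ _ _ _ _ _ _ (p x0 (sig t)) (p (gam t) y0)); last 2 first.
    exact: phi_fin. exact: phi_fin.
  rewrite lee_fin ler_pdivlMr // le_max; apply/orP; left.
  apply: le_trans hS.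
  have h1 : 0 <= (mu * D * (1 - t / 2) - (mu * D - e)) * r' by rewrite mulr_ge0 //; lra.
  have h2 : 0 <= mu * D * (1 - t / 2) * (t * D - r').
    apply: mulr_ge0; last by rewrite subr_ge0.
    apply: mulr_ge0; first exact: ltW (mulr_gt0 mup Dp).
    lra.
  have -> : mu / 2 * t * (2 - t) * D ^+ 2 = mu * D * (1 - t / 2) * (t * D) by field.
  rewrite -/r'; lra.
split; first exact: part1.
split; last first.
  by split => //; apply: le_lt_trans part1 _; exact: ltry.
have -> : D / tau = (1 + lam * tau)^-1 * (mu * D).
  by rewrite /mu; field; rewrite (gt_eqF tau0) (gt_eqF hmu).
rewrite EFinM lee_pmul2l // lte_fin invr_gt0 //.
Qed.
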